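(* Let $n,m$ be even positive integers. If $n\geq 4$ or $m\geq 4$, then the torus $T_{n,m}$ satisfies $T_{n,m}=0$ as an instance of Bipartite Influence. Let $n$ be an even positive integer and $m$ a positive integer. If ($n\geq 4$ and $m$ is even) or $n=4k+2$ for some positive integer $k$, then the cylinder $C_{n,m}$ satisfies $C_{n,m}=0$ as an instance of Bipartite Influence.
   Context: Cylinder $C_{n,m}$ ($n$ even): vertices $v_{i,j}$, $1\le i\le n$, $1\le j\le m$; $v_{i,j}$ and $v_{i',j'}$ are adjacent iff ($i=i'$ and $j=j'\pm1$) or ($j=j'$ and $i\equiv i'\pm1 \pmod n$). Torus $T_{n,m}$ ($n,m$ even): same vertices, adjacent iff ($i=i'$ and $j\equiv j'\pm1\pmod m$) or ($j=j'$ and $i\equiv i'\pm 1\pmod n$). In both, $v_{i,j}$ is black iff $i+j$ is even, white otherwise. Bipartite Influence: isolated vertices are credited to the owner of their colour (black to Left, white to Right); Left picks a black vertex $x$ and removes $x$, its neighbours and the vertices that become isolated (credited to her); Right likewise with white vertices; score = Left's total minus Right's. $G=0$ means $Ls(G+X)=Ls(X)$ and $Rs(G+X)=Rs(X)$ for every position $X$ (disjoint union as sum), where $Ls,Rs$ are optimal scores with Left, resp. Right, moving first. *)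

(* Defs.v *)
From HB Require Import structures.
From mathcomp Require Import all_boot all_order all_algebra.
Unset Printing Implicit Defensive.
Import Order.TTheory GRing.Theory Num.Theory.

(* A position of Bipartite Influence: a finite graph whose vertices are
   coloured black (true, Left's colour) or white (false, Right's colour),
   every edge joining vertices of different colours. *)
Record position := Position {
  pV : finType;
  padj : rel pV;
  pcol : pV -> bool;
  padj_sym : symmetric padj;
  padj_bip : forall x y, padj x y -> pcol x != pcol y }.

Section Game.
Local Open Scope ring_scope.
Variable P : position.

Definition isolated (S : {set pV P}) : {set pV P} :=
  [set x in S | [forall y in S, ~~ padj P x y]].

Definition cnbhd (S : {set pV P}) (x : pV P) : {set pV P} :=
  [set y in S | (y == x) || padj P x y].

Definition after (S : {set pV P}) (x : pV P) : {set pV P} :=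
  let S1 := S :\: cnbhd S x in S1 :\: isolated S1.

(* number of vertices credited to the player playing x *)
Definition gain (S : {set pV P}) (x : pV P) : int :=
  Posz (#|cnbhd S x| + #|isolated (S :\: cnbhd S x)|)%N.

Definition maxl (a : int) (s : seq int) : int := foldr Order.max a s.
Definition minl (a : int) (s : seq int) : int := foldr Order.min a s.

(* optimal score (Left's total minus Right's) of the remaining game on S
   (S without isolated vertices), [lft] = Left to move; fuel k >= #|S|. *)
Fixpoint gval (k : nat) (lft : bool) (S : {set pV P}) : int :=
  match k with
  | 0 => 0
  | k'.+1 =>
    let f x := if lft then gain S x + gval k' false (after S x)
               else - gain S x + gval k' true (after S x) in
    match [seq x <- enum S | pcol P x == lft] with
    | [::] => 0
    | x0 :: xs => if lft then maxl (f x0) (map f xs) else minl (f x0) (map f xs)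
    end
  end.

Definition init_score : int :=
  \sum_(x in isolated setT) (if pcol P x then 1 else -1).

Definition Ls : int := init_score + gval #|pV P| true (setT :\: isolated setT).
Definition Rs : int := init_score + gval #|pV P| false (setT :\: isolated setT).

End Game.

Definition sum_adj (G X : position) : rel (pV G + pV X)%type :=
  fun u v => match u, v with
             | inl a, inl b => padj G a b
             | inr a, inr b => padj X a b
             | _, _ => false end.

Definition sum_col (G X : position) (u : (pV G + pV X)%type) : bool :=
  match u with inl a => pcol G a | inr a => pcol X a end.

Lemma sum_adj_sym G X : symmetric (@sum_adj G X).
Proof. by case=> a [] b //=; apply: padj_sym. Qed.

Lemma sum_adj_bip G X u v : @sum_adj G X u v -> sum_col G X u != sum_col G X v.
Proof. by case: u v => a [] b //= /padj_bip. Qed.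

Definition psum (G X : position) : position :=
  @Position (pV G + pV X)%type (@sum_adj G X) (@sum_col G X)
            (@sum_adj_sym G X) (@sum_adj_bip G X).

Definition is_zero (G : position) : Prop :=
  forall X : position, Ls (psum G X) = Ls X /\ Rs (psum G X) = Rs X.

(* Grids: vertex v_{i,j} is the pair (i-1, j-1) in 'I_n * 'I_m;
   black iff i + j even (shifting both indices by one preserves parity). *)
Definition grid_col (n m : nat) (u : 'I_n * 'I_m) : bool := ~~ odd (u.1 + u.2).

Lemma odd_mod_even a m : ~~ odd m -> odd (a %% m) = odd a.
Proof.
move=> hm; rewrite [in RHS](divn_eq a m) oddD oddM (negbTE hm) andbF.
by [].
Qed.

Definition torus_adj (n m : nat) : rel ('I_n * 'I_m) :=
  fun u v =>
    ((u.1 == v.1 :> nat) && ((u.2.+1 %% m == v.2) || (v.2.+1 %% m == u.2)))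
 || ((u.2 == v.2 :> nat) && ((u.1.+1 %% n == v.1) || (v.1.+1 %% n == u.1))).

Definition cyl_adj (n m : nat) : rel ('I_n * 'I_m) :=
  fun u v =>
    ((u.1 == v.1 :> nat) && ((u.2.+1 == v.2 :> nat) || (v.2.+1 == u.2 :> nat)))
 || ((u.2 == v.2 :> nat) && ((u.1.+1 %% n == v.1) || (v.1.+1 %% n == u.1))).

Lemma torus_adj_sym n m : symmetric (torus_adj n m).
Proof.
move=> u v; rewrite /torus_adj.
by rewrite (eq_sym (val u.1)) (eq_sym (val u.2)) (orbC (_ %% m == _)) (orbC (_ %% n == _)).
Qed.

Lemma cyl_adj_sym n m : symmetric (cyl_adj n m).
Proof.
move=> u v; rewrite /cyl_adj.
by rewrite (eq_sym (val u.1)) (eq_sym (val u.2)) (orbC (_.+1 == _)) (orbC (_ %% n == _)).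
Qed.

Lemma parity_step n a b : ~~ odd n -> (a.+1 %% n == b) || (b.+1 %% n == a) ->
  odd b = ~~ odd a.
Proof.
move=> hn /orP[/eqP <-|/eqP <-]; rewrite odd_mod_even //=; by case: odd.
Qed.

Lemma torus_adj_bip n m (hn : ~~ odd n) (hm : ~~ odd m) u v :
  torus_adj n m u v -> grid_col n m u != grid_col n m v.
Proof.
rewrite /torus_adj /grid_col => /orP[/andP[/eqP e h]|/andP[/eqP e h]];
  rewrite !oddD e.
- by rewrite (parity_step m _ _ hm h); case: (odd _); case: (odd _).
- by rewrite (parity_step n _ _ hn h); case: (odd _); case: (odd _).
Qed.

Lemma cyl_adj_bip n m (hn : ~~ odd n) u v :
  cyl_adj n m u v -> grid_col n m u != grid_col n m v.
Proof.
rewrite /cyl_adj /grid_col => /orP[/andP[/eqP e /orP[/eqP h|/eqP h]]|/andP[/eqP e h]];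
  rewrite !oddD e.
- by rewrite -h /=; case: (odd _); case: (odd _).
- by rewrite -h /=; case: (odd _); case: (odd _).
- by rewrite (parity_step n _ _ hn h); case: (odd _); case: (odd _).
Qed.

Definition torus (n m : nat) (hn : ~~ odd n) (hm : ~~ odd m) : position :=
  @Position ('I_n * 'I_m)%type (torus_adj n m) (@grid_col n m)
            (@torus_adj_sym n m) (@torus_adj_bip n m hn hm).

Definition cylinder (n m : nat) (hn : ~~ odd n) : position :=
  @Position ('I_n * 'I_m)%type (cyl_adj n m) (@grid_col n m)
            (@cyl_adj_sym n m) (@cyl_adj_bip n m hn).

(* Main.v *)
From HB Require Import structures.
From mathcomp Require Import all_boot all_order all_algebra zify.
Require Import Defs.
Import Order.TTheory GRing.Theory Num.Theory.
Set Implicit Arguments. Unset Strict Implicit. Unset Printing Implicit Defensive.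

Section Basic.
Local Open Scope ring_scope.

Lemma maxl_ge (a : int) s x : x \in a :: s -> x <= maxl a s.
Proof.
elim: s x => [|y s IH] x /=; first by rewrite inE => /eqP ->.
rewrite le_max; rewrite !inE => /or3P[/eqP->|/eqP->|h].
- by rewrite (IH a) ?orbT // mem_head.
- by rewrite lexx.
- by rewrite (IH x) ?orbT // inE h orbT.
Qed.

Lemma maxl_in (a : int) s : maxl a s \in a :: s.
Proof.
elim: s => [|y s IH] /=; first by rewrite inE.
rewrite /Order.max; case: ifP => _.
  by move: IH; rewrite !inE => /orP[->|->]; rewrite ?orbT.
by rewrite !inE eqxx orbT.
Qed.

Lemma minl_le (a : int) s x : x \in a :: s -> minl a s <= x.
Proof.
elim: s x => [|y s IH] x /=; first by rewrite inE => /eqP ->.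
rewrite ge_min; rewrite !inE => /or3P[/eqP->|/eqP->|h].
- by rewrite IH ?orbT // inE eqxx.
- by rewrite lexx.
- by rewrite IH ?inE ?h ?orbT.
Qed.

Lemma minl_in (a : int) s : minl a s \in a :: s.
Proof.
elim: s => [|y s IH] /=; first by rewrite inE.
rewrite /Order.min; case: ifP => _.
  by rewrite !inE eqxx orbT.
by move: IH; rewrite !inE => /orP[->|->]; rewrite ?orbT.
Qed.
End Basic.
Section Game.
Local Open Scope ring_scope.
Variable P : position.
Local Notation T := (pV P).
Local Notation adj := (padj P).
Local Notation col := (pcol P).

Definition V t (S : {set T}) := gval P #|S| t S.
Definition isofree (S : {set T}) := forall x, x \in S -> exists2 y, y \in S & adj x y.
Definition opts t (S : {set T}) := [seq x <- enum S | col x == t].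
Definition choose (t : bool) (f : T -> int) (l : seq T) : int :=
  match l with [::] => 0 | x0 :: xs => if t then maxl (f x0) (map f xs) else minl (f x0) (map f xs) end.
Definition optv k t S x := if t then gain P S x + gval P k false (after P S x)
                           else - gain P S x + gval P k true (after P S x).

Lemma gvalS k t (S : {set T}) : gval P k.+1 t S = choose t (optv k t S) (opts t S).
Proof. by []. Qed.

Lemma mem_opts t (S : {set T}) (x : T) : (x \in opts t S) = (x \in S) && (col x == t).
Proof. by rewrite mem_filter mem_enum andbC. Qed.

Lemma choose_eq_in t f g l : {in l, f =1 g} -> choose t f l = choose t g l.
Proof.
case: l => [|x0 xs] //= h; rewrite h ?mem_head //.
have -> // : map f xs = map g xs.
by apply/eq_in_map => y hy; apply: h; rewrite inE hy orbT.
Qed.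

Lemma choose_ge f l x : x \in l -> f x <= choose true f l.
Proof.
case: l => [|x0 xs] //= hx; apply: maxl_ge.
by rewrite -/(map f (x0 :: xs)) map_f.
Qed.

Lemma choose_le f l x : x \in l -> choose false f l <= f x.
Proof.
case: l => [|x0 xs] //= hx; apply: minl_le.
by rewrite -/(map f (x0 :: xs)) map_f.
Qed.

Lemma choose_ex t f l : l != [::] -> exists2 x, x \in l & choose t f l = f x.
Proof.
case: l => [|x0 xs] //= _.
have: (if t then maxl (f x0) (map f xs) else minl (f x0) (map f xs)) \in map f (x0 :: xs).
  by case: t; [apply: maxl_in | apply: minl_in].
by case/mapP => x hx ->; exists x.
Qed.

Lemma in_cnbhd (S : {set T}) (x y : T) : (y \in cnbhd P S x) = (y \in S) && ((y == x) || adj x y).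
Proof. by rewrite inE. Qed.

Lemma in_isolated (S : {set T}) (y : T) : (y \in isolated P S) = (y \in S) && [forall z in S, ~~ adj y z].
Proof. by rewrite inE. Qed.

Lemma in_after (S : {set T}) (x y : T) : (y \in after P S x) =
  [&& y \in S, y \notin cnbhd P S x & y \notin isolated P (S :\: cnbhd P S x)].
Proof. by rewrite /after !in_setD; case: (y \in S); rewrite ?andbF ?andbT // andbC. Qed.

Lemma after_sub (S : {set T}) (x : T) : after P S x \subset S.
Proof. by apply/subsetP => y; rewrite in_after => /and3P[]. Qed.

Lemma card_after (S : {set T}) (x : T) : x \in S -> (#|after P S x| < #|S|)%N.
Proof.
move=> xS; rewrite (cardsD1 x S) xS add1n ltnS; apply: subset_leq_card.
apply/subsetP => y; rewrite in_after in_cnbhd => /and3P[yS hn _]; rewrite !inE yS andbT.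
by apply: contraNN hn => /eqP eyx; rewrite yS eyx eqxx.
Qed.

Lemma gval_fuel_gen k k' t (S : {set T}) : (#|S| <= k)%N -> (#|S| <= k')%N -> gval P k t S = gval P k' t S.
Proof.
elim: k k' t S => [|k IH] k' t S hk hk'.
  move: hk; rewrite leqn0 => /eqP/cards0_eq ->.
  by case: k' {hk'} => //= k'; rewrite /opts enum_set0.
case: k' hk' => [|k'] hk'.
  move: hk'; rewrite leqn0 => /eqP/cards0_eq ->.
  by rewrite /= enum_set0.
rewrite !gvalS; apply: choose_eq_in => x; rewrite mem_opts => /andP[xS _].
have h := card_after xS.
have h1 : (#|after P S x| <= k)%N by rewrite -ltnS; apply: leq_trans h hk.
have h2 : (#|after P S x| <= k')%N by rewrite -ltnS; apply: leq_trans h hk'.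
by rewrite /optv (IH k' false) ?(IH k' true).
Qed.

Lemma gval_fuel k t (S : {set T}) : (#|S| <= k)%N -> gval P k t S = V t S.
Proof. by move=> h; apply: gval_fuel_gen. Qed.

Lemma V_ge (S : {set T}) (x : T) : x \in S -> col x -> gain P S x + V false (after P S x) <= V true S.
Proof.
move=> xS cx; have := card_after xS; case E: #|S| => [|k] // h.
have -> : V true S = gval P k.+1 true S by rewrite /V E.
rewrite gvalS -(gval_fuel false h); apply: (choose_ge (optv k true S)).
by rewrite mem_opts xS cx.
Qed.

Lemma V_le (S : {set T}) (x : T) : x \in S -> col x = false -> V false S <= - gain P S x + V true (after P S x).
Proof.
move=> xS cx; have := card_after xS; case E: #|S| => [|k] // h.
have -> : V false S = gval P k.+1 false S by rewrite /V E.
rewrite gvalS -(gval_fuel true h); apply: (choose_le (optv k false S)).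
by rewrite mem_opts xS cx.
Qed.

Lemma V_ex t (S : {set T}) : (exists2 x, x \in S & col x = t) ->
  exists x, [/\ x \in S, col x = t &
     V t S = if t then gain P S x + V false (after P S x) else - gain P S x + V true (after P S x)].
Proof.
case=> x0 x0S cx0; have := card_after x0S; case E: #|S| => [|k] // _.
have -> : V t S = gval P k.+1 t S by rewrite /V E.
rewrite gvalS; case: (@choose_ex t (optv k t S) (opts t S)).
  apply/negP => /eqP h; have: x0 \in opts t S by rewrite mem_opts x0S cx0 eqxx.
  by rewrite h.
move=> x; rewrite mem_opts => /andP[xS /eqP cx] ->; exists x; split => //.
have := card_after xS; rewrite E ltnS => h.
by rewrite /optv (gval_fuel false h) (gval_fuel true h).
Qed.

Lemma V_nil t (S : {set T}) : (forall x, x \in S -> col x != t) -> V t S = 0.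
Proof.
move=> h; rewrite /V; case: #|S| => [|k] //; rewrite gvalS.
case E: (opts t S) => [|x xs] //.
have: x \in opts t S by rewrite E mem_head.
by rewrite mem_opts => /andP[xS /eqP ct]; move: (h x xS); rewrite ct eqxx.
Qed.

End Game.
Section Game2.
Local Open Scope ring_scope.
Variable P : position.
Local Notation T := (pV P).
Local Notation adj := (padj P).
Local Notation col := (pcol P).

Lemma adj_col (x y : T) : adj x y -> col y = ~~ col x.
Proof. by move/padj_bip; case: (col x); case: (col y). Qed.

Lemma adj_sym (x y : T) : adj x y = adj y x.
Proof. exact: padj_sym. Qed.

Lemma in_diffN (S : {set T}) x w :
  (w \in S :\: cnbhd P S x) = (w \in S) && ~~ ((w == x) || adj x w).
Proof. by rewrite in_setD in_cnbhd; case: (w \in S); rewrite ?andbF ?andbT. Qed.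

Lemma isolatedP (S : {set T}) y :
  reflect (y \in S /\ forall z, z \in S -> ~~ adj y z) (y \in isolated P S).
Proof.
rewrite in_isolated; apply: (iffP andP) => [[h /forall_inP H]|[h H]]; split => //.
by apply/forall_inP.
Qed.

Lemma isofree_diso (A : {set T}) : isofree (A :\: isolated P A).
Proof.
move=> z; rewrite inE => /andP[zi zA].
have [w wA wz] : exists2 w, w \in A & adj z w.
  case: (boolP [exists w in A, adj z w]) => [/exists_inP[w ? ?]|]; first by exists w.
  rewrite negb_exists_in => /forall_inP H; case/negP: zi; apply/isolatedP; split => //.
exists w => //; rewrite inE wA andbT; apply/negP => /isolatedP[_ H].
by move: (H z zA); rewrite adj_sym wz.
Qed.

Lemma isofree_after (S : {set T}) x : isofree (after P S x).
Proof. exact: isofree_diso. Qed.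

Lemma isofree_col (S : {set T}) x t : isofree S -> x \in S -> exists2 y, y \in S & col y = t.
Proof.
move=> fS xS; case: (eqVneq (col x) t) => [<-|ne]; first by exists x.
case: (fS x xS) => y yS xy; exists y => //; rewrite (adj_col xy).
by move: ne; case: (col x); case: t.
Qed.

Lemma gain_card (S : {set T}) x : gain P S x = #|S|%:Z - #|after P S x|%:Z.
Proof.
have sub1 : cnbhd P S x \subset S by apply/subsetP => y; rewrite in_cnbhd => /andP[].
set S1 := S :\: cnbhd P S x.
have sub2 : isolated P S1 \subset S1 by apply/subsetP => y /isolatedP[].
have e1 := cardsID (cnbhd P S x) S; rewrite (setIidPr sub1) in e1.
have e2 := cardsID (isolated P S1) S1; rewrite (setIidPr sub2) in e2.
rewrite /gain -/S1; have -> : after P S x = S1 :\: isolated P S1 by [].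
rewrite -e1 -e2; lia.
Qed.

Lemma V_cases t (S : {set T}) : V t S = 0 \/ exists x, [/\ x \in S, col x = t &
     V t S = if t then gain P S x + V false (after P S x) else - gain P S x + V true (after P S x)].
Proof.
case: (pickP (fun y => (y \in S) && (col y == t))) => [y /andP[yS /eqP cy]|h].
  by right; apply: V_ex; exists y.
by left; apply: V_nil => x xS; move: (h x); rewrite xS /= => ->.
Qed.

Lemma V_ub n t (S : {set T}) : (#|S| <= n)%N -> V t S <= #|S|%:Z.
Proof.
elim: n t S => [|n IH] t S hn.
  by move: hn; rewrite leqn0 => /eqP/cards0_eq ->; rewrite /V cards0 /= lexx.
case: (V_cases t S) => [->|[x [xS cx ->]]] //.
have ha := card_after xS.
have hb : (#|after P S x| <= n)%N by rewrite -ltnS; apply: leq_trans ha hn.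
have hc := subset_leq_card (after_sub S x).
rewrite gain_card; case: t cx => _.
  by have := IH false _ hb; lia.
by have := IH true _ hb; lia.
Qed.

End Game2.
Section Game3.
Local Open Scope ring_scope.
Variable P : position.
Local Notation T := (pV P).
Local Notation adj := (padj P).
Local Notation col := (pcol P).

Definition condC (S U : {set T}) :=
  forall z w, z \in U -> col z = false -> w \in S -> w \notin U -> ~~ adj z w.

Lemma diffN_sub (S U : {set T}) x : U \subset S -> U :\: cnbhd P U x \subset S :\: cnbhd P S x.
Proof.
move=> sub; apply/subsetP => w; rewrite !in_diffN => /andP[wU h].
by rewrite (subsetP sub _ wU).
Qed.

Lemma after_sub1 (S : {set T}) x : after P S x \subset S :\: cnbhd P S x.
Proof. by apply/subsetP => w; rewrite in_after in_diffN in_cnbhd => /and3P[-> -> _]. Qed.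

Lemma notin_after (S : {set T}) x w : w \in S -> w \notin after P S x ->
  w \in cnbhd P S x \/ (w \in S :\: cnbhd P S x /\ w \in isolated P (S :\: cnbhd P S x)).
Proof.
move=> wS; rewrite in_after wS /=; case: (boolP (w \in cnbhd P S x)) => hc /=; first by left.
by rewrite negbK => hi; right; split => //; rewrite in_setD hc wS.
Qed.

Lemma after_subset (S U : {set T}) x : U \subset S -> after P U x \subset after P S x.
Proof.
move=> sub; apply/subsetP => z; rewrite !in_after !in_cnbhd => /and3P[zU hc hi].
rewrite (subsetP sub _ zU) /=; rewrite zU /= in hc; rewrite hc /=.
apply/negP => /isolatedP[_ H]; case/negP: hi; apply/isolatedP; split.
  by rewrite in_diffN zU.
move=> w wU1; apply: H; exact: (subsetP (diffN_sub x sub) _ wU1).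
Qed.

Lemma condC_after (S U : {set T}) x : U \subset S -> condC S U -> condC (after P S x) (after P U x).
Proof.
move=> sub cond z w zUx cz wSx wnUx.
have zU1 := subsetP (after_sub1 U x) _ zUx.
have wS1 := subsetP (after_sub1 S x) _ wSx.
case wU: (w \in U); last first.
  apply: cond => //; first by apply: (subsetP (after_sub U x)).
  by apply: (subsetP (after_sub S x)). by rewrite wU.
case: (notin_after wU wnUx) => [|[_ /isolatedP[_ H]]].
  by rewrite in_cnbhd wU /=; move: wS1; rewrite in_diffN => /andP[_ /negbTE ->].
by rewrite adj_sym; apply: H.
Qed.

Lemma notin_cnbhd_out (S U : {set T}) x : x \in S -> x \notin U -> col x -> condC S U ->
  forall u, u \in U -> u \notin cnbhd P S x.
Proof.
move=> xS xU cx cond u uU; rewrite in_cnbhd negb_and negb_or; apply/orP; right.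
apply/andP; split; first by apply: contraNN xU => /eqP <-.
apply/negP => a; have cu : col u = false by rewrite (adj_col a) cx.
by move: (cond u x uU cu xS xU); rewrite adj_sym a.
Qed.

Lemma sub_after_out (S U : {set T}) x : x \in S -> x \notin U -> col x -> condC S U ->
  isofree U -> U \subset S -> U \subset after P S x.
Proof.
move=> xS xU cx cond fU sub; have H := notin_cnbhd_out xS xU cx cond.
apply/subsetP => z zU; rewrite in_after (subsetP sub _ zU) H //=.
apply/negP => /isolatedP[_ I]; case: (fU z zU) => w wU zw.
move: (I w); rewrite zw => /implyP; rewrite /= in_diffN (subsetP sub _ wU) /=.
by move: (H w wU); rewrite in_cnbhd (subsetP sub _ wU) => ->.
Qed.

Lemma condC_sub (S S' U : {set T}) : S' \subset S -> condC S U -> condC S' U.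
Proof. by move=> sub cond z w zU cz wS'; apply: cond => //; apply: (subsetP sub). Qed.

Lemma after_white (S U : {set T}) y : y \in U -> col y = false -> condC S U -> U \subset S ->
  isofree U -> after P U y = U :&: after P S y.
Proof.
move=> yU cy cond sub fU.
have EN : cnbhd P U y = cnbhd P S y.
  apply/setP => w; rewrite !in_cnbhd; case wU: (w \in U); first by rewrite (subsetP sub _ wU).
  apply/esym/negP => /andP[wS /orP[/eqP e|a]]; first by rewrite e yU in wU.
  by move: (cond y w yU cy wS (negbT wU)); rewrite a.
apply/setP => z; rewrite in_setI !in_after EN.
case zU: (z \in U) => //=; rewrite (subsetP sub _ zU) /=.
case zN: (z \in cnbhd P S y) => //=; congr negb.
case cz: (col z).
  case: (fU z zU) => w wU zw.
  have wN : w \notin cnbhd P S y.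
    rewrite in_cnbhd negb_and negb_or; apply/orP; right; apply/andP; split.
      apply/negP => /eqP e; move: zN; rewrite in_cnbhd (subsetP sub _ zU) -e adj_sym zw orbT.
      done.
    by apply/negP => a; move: (adj_col a) (adj_col zw); rewrite cy cz => ->.
  have h1 : w \in U :\: cnbhd P S y by rewrite inE wN wU.
  have h2 : w \in S :\: cnbhd P S y by rewrite inE wN (subsetP sub _ wU).
  apply/idP/idP => /isolatedP[_ I].
    by move: (I w h1); rewrite zw.
  by move: (I w h2); rewrite zw.
apply/idP/idP => /isolatedP[zin I]; apply/isolatedP; split.
- by rewrite inE zN (subsetP sub _ zU).
- move=> w; rewrite inE => /andP[wN wS]; case wU: (w \in U).
    by apply: I; rewrite inE wN wU.
  by apply: cond => //; rewrite wU.
- by rewrite inE zN zU.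
- by move=> w; rewrite inE => /andP[wN wU]; apply: I; rewrite inE wN (subsetP sub _ wU).
Qed.

Lemma condC_self (U : {set T}) x : col x -> condC U (after P U x).
Proof.
move=> cx z w zUx cz wU wn; apply/negP => zw.
have zU1 := subsetP (after_sub1 U x) _ zUx.
case: (notin_after wU wn) => [|[_ /isolatedP[_ I]]].
  rewrite in_cnbhd wU /= => /orP[/eqP e|a].
    move: zU1; rewrite in_diffN => /andP[_]; by rewrite -e adj_sym zw orbT.
  by move: (adj_col a) (adj_col zw); rewrite cx cz => ->.
by move: (I z zU1); rewrite adj_sym zw.
Qed.

End Game3.
Section Claim.
Local Open Scope ring_scope.
Variable P : position.
Local Notation T := (pV P).
Local Notation adj := (padj P).
Local Notation col := (pcol P).

Lemma V_set0 t : V t (set0 : {set T}) = 0.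
Proof. by apply: V_nil => x; rewrite inE. Qed.

Lemma claimC n : forall t (S U : {set T}), (#|S| <= n)%N -> U \subset S -> isofree S ->
  isofree U -> condC S U -> V t S <= #|S|%:Z - #|U|%:Z + V t U.
Proof.
elim: n => [|n IH] t S U hn sub fS fU cond.
  have S0 : S = set0 by apply/cards0_eq; apply/eqP; rewrite -leqn0.
  have U0 : U = set0 by apply/eqP; rewrite -subset0 -S0.
  rewrite S0 U0 cards0; lia.
have LR : forall U' : {set T}, (#|U'| <= n)%N -> isofree U' -> V false U' <= V true U'.
  move=> U' hU' fU'; case: (set_0Vmem U') => [->|[u uU]]; first by rewrite !V_set0.
  case: (isofree_col true fU' uU) => x xU cx.
  have h1 := V_ge xU cx.
  have h2 := IH false U' (after P U' x) hU' (after_sub U' x) fU' (@isofree_after P U' x) (@condC_self P U' x cx).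
  have h3 := subset_leq_card (after_sub U' x).
  rewrite gain_card in h1; lia.
case: t.
- case: (set_0Vmem S) => [S0|[s sS]].
    have U0 : U = set0 by apply/eqP; rewrite -subset0 -S0.
    rewrite S0 U0 cards0; lia.
  case: (V_ex (isofree_col true fS sS)) => x [xS cx ->].
  have hx := card_after xS.
  have hSx : (#|after P S x| <= n)%N by rewrite -ltnS; apply: leq_trans hx hn.
  have c1 := subset_leq_card (after_sub S x).
  case xU: (x \in U).
    have h1 := IH false (after P S x) (after P U x) hSx (after_subset x sub)
       (@isofree_after P S x) (@isofree_after P U x) (@condC_after P S U x sub cond).
    have h2 := V_ge xU cx.
    have c2 := subset_leq_card (after_sub U x).
    rewrite !gain_card in h2 *; lia.
  have subx := sub_after_out xS (negbT xU) cx cond fU sub.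
  have h1 := IH false (after P S x) U hSx subx (@isofree_after P S x) fU (@condC_sub P S (after P S x) U (after_sub S x) cond).
  have c2 := subset_leq_card subx.
  have hU : (#|U| <= n)%N by apply: leq_trans c2 hSx.
  have h2 := LR U hU fU.
  rewrite gain_card; lia.
- case: (set_0Vmem U) => [U0|[u uU]].
    rewrite U0 V_set0 cards0; have := V_ub false hn; lia.
  case: (V_ex (isofree_col false fU uU)) => y [yU cy ->].
  have yS := subsetP sub _ yU.
  have h1 := V_le yS cy.
  have E := after_white yU cy cond sub fU.
  have hy := card_after yS.
  have hSy : (#|after P S y| <= n)%N by rewrite -ltnS; apply: leq_trans hy hn.
  have subU : after P U y \subset after P S y by rewrite E subsetIr.
  have condy : condC (after P S y) (after P U y).
    move=> z w zU cz wS wn; apply: cond => //.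
      by move: zU; rewrite E inE => /andP[].
      exact: (subsetP (after_sub S y)).
    by apply: contraNN wn => wU; rewrite E inE wU.
  have h2 := IH true (after P S y) (after P U y) hSy subU (@isofree_after P S y) (@isofree_after P U y) condy.
  have c1 := cardsUI U (after P S y).
  have c2 : (#|U :|: after P S y| <= #|S|)%N.
    by apply: subset_leq_card; rewrite subUset sub after_sub.
  rewrite gain_card in h1; rewrite E in h2 *; rewrite !gain_card E; lia.
Qed.

Lemma LR_gen (U : {set T}) : isofree U -> V false U <= V true U.
Proof.
move=> fU; case: (set_0Vmem U) => [->|[u uU]]; first by rewrite !V_set0.
case: (isofree_col true fU uU) => x xU cx.
have h1 := V_ge xU cx.
have h2 := claimC false (leqnn _) (after_sub U x) fU (@isofree_after P U x) (@condC_self P U x cx).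
have h3 := subset_leq_card (after_sub U x).
rewrite gain_card in h1; lia.
Qed.

End Claim.
Section Mirror.
Local Open Scope ring_scope.
Variable P : position.
Local Notation T := (pV P).
Local Notation adj := (padj P).
Local Notation col := (pcol P).

Section Pair.
Variables (S : {set T}) (x y : T).
Hypotheses (fS : isofree S) (xS : x \in S) (yS : y \in S) (cxy : col y = ~~ col x) (nxy : ~~ adj x y).

Lemma nbr_out_gen (a b : T) : col b = ~~ col a -> ~~ adj a b ->
  forall w, w \in cnbhd P S b -> w \notin cnbhd P S a.
Proof.
move=> cab nab w; rewrite !in_cnbhd => /andP[wS h]; rewrite wS /=.
case/orP: h => [/eqP ew|bw].
  rewrite ew negb_or nab andbT; apply/negP => /eqP e; move: cab; rewrite e.
  by case: (col a).
rewrite negb_or; apply/andP; split.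
  by apply/negP => /eqP e; move: nab; rewrite -e adj_sym bw.
apply/negP => aw; move: (adj_col aw) (adj_col bw); rewrite cab.
by case: (col a); case: (col w).
Qed.

Lemma K0 : y \in after P S x.
Proof.
have yN : y \notin cnbhd P S x.
  apply: (nbr_out_gen cxy nxy); by rewrite in_cnbhd yS eqxx.
rewrite in_after yS yN /=; apply/negP => /isolatedP[_ I].
case: (fS yS) => w wS yw.
have wN : w \notin cnbhd P S x.
  by apply: (nbr_out_gen cxy nxy); rewrite in_cnbhd wS yw orbT.
by move: (I w); rewrite in_setD wN wS yw => /(_ isT).
Qed.

Lemma K1 : cnbhd P (after P S x) y = cnbhd P S y.
Proof.
apply/setP => w; rewrite !in_cnbhd.
case h: ((w == y) || adj y w); rewrite ?andbT ?andbF //.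
apply/idP/idP => [|wS]; first by apply: (subsetP (after_sub S x)).
have wN : w \notin cnbhd P S x by apply: (nbr_out_gen cxy nxy); rewrite in_cnbhd wS h.
case/orP: h => [/eqP -> | yw]; first exact: K0.
rewrite in_after wS wN /=; apply/negP => /isolatedP[_ I].
have yS1 := subsetP (after_sub1 S x) _ K0.
by move: (I y yS1); rewrite adj_sym yw.
Qed.

Lemma nbr_out_x w : w \in cnbhd P S x -> w \notin cnbhd P S y.
Proof.
have cyx : col x = ~~ col y by rewrite cxy; case: (col x).
have nyx : ~~ adj y x by rewrite adj_sym.
exact: (nbr_out_gen cyx nyx).
Qed.

Lemma K2 : isolated P (after P S x :\: cnbhd P S y) = isolated P (S :\: cnbhd P S y).
Proof.
set N := cnbhd P S y; set S' := after P S x.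
have sub' : S' \subset S := after_sub S x.
apply/setP => z; apply/idP/idP => /isolatedP[zin I]; apply/isolatedP; split.
- by move: zin; rewrite in_setD => /andP[zN zS']; rewrite in_setD zN (subsetP sub' _ zS').
- move=> w; rewrite in_setD => /andP[wN wS]; apply/negP => zw.
  move: zin; rewrite in_setD => /andP[zN zS'].
  have zS1 := subsetP (after_sub1 S x) _ zS'.
  have wS' : w \notin S'.
    by apply/negP => wS'; move: (I w); rewrite in_setD wN wS' zw => /(_ isT).
  case: (notin_after wS wS') => [|[_ /isolatedP[_ J]]]; last first.
    by move: (J z zS1); rewrite adj_sym zw.
  rewrite in_cnbhd wS /= => /orP[/eqP e|xw].
    by move: zS1; rewrite in_diffN -e adj_sym zw orbT andbF.
  have cz : col z = col x.
    by move: (adj_col xw) (adj_col zw); case: (col x); case: (col z); case: (col w).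
  have [v vS' zv] := @isofree_after P S x z zS'.
  have vN : v \notin N.
    rewrite /N in_cnbhd negb_and negb_or; apply/orP; right; apply/andP; split.
      apply/negP => /eqP e; move: zN; rewrite /N in_cnbhd (subsetP sub' _ zS') /=.
      by rewrite -e adj_sym zv orbT.
    apply/negP => yv; move: (adj_col yv) (adj_col zv); rewrite cxy cz.
    by case: (col x); case: (col v).
  by move: (I v); rewrite in_setD vN vS' zv => /(_ isT).
- move: zin; rewrite in_setD => /andP[zN zS]; rewrite in_setD zN /=.
  have xS1 : x \in S :\: N.
    by rewrite in_setD xS andbT; apply: nbr_out_x; rewrite in_cnbhd xS eqxx.
  have zx : ~~ adj z x by apply: I.
  have zcx : z \notin cnbhd P S x.
    rewrite in_cnbhd zS /= negb_or; apply/andP; split; last by rewrite adj_sym.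
    apply/negP => /eqP e; rewrite e in zx I.
    case: (fS xS) => w wS xw; have := I w; rewrite in_setD wS andbT.
    have -> : w \notin N by apply: nbr_out_x; rewrite in_cnbhd wS xw orbT.
    by rewrite xw => /(_ isT).
  rewrite in_after zS zcx /=; apply/negP => /isolatedP[_ J].
  case: (fS zS) => w wS zw.
  have wN : w \in N.
    apply/negPn/negP => wN; by move: (I w); rewrite in_setD wN wS zw => /(_ isT).
  have wx : w \notin cnbhd P S x.
    by apply/negP => h; move: (nbr_out_x h); rewrite wN.
  by move: (J w); rewrite in_diffN wS zw /=; move: wx; rewrite in_cnbhd wS /= => -> /(_ isT).
- move=> w wS'; apply: I; move: wS'; rewrite in_setD => /andP[wN wS'].
  by rewrite in_setD wN (subsetP sub' _ wS').
Qed.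

Lemma K_gain : gain P (after P S x) y = gain P S y.
Proof. by rewrite /gain K1 K2. Qed.

Lemma K_after : after P (after P S x) y = after P S x :&: after P S y.
Proof.
rewrite {1}/after K1 K2; have sub := after_sub S x.
move: (after P S x) sub => S' sub; apply/setP => z; rewrite in_setI in_after !in_setD.
case zS': (z \in S'); last by rewrite !andbF.
rewrite (subsetP sub _ zS') /=.
by case: (z \in cnbhd P S y); case: (z \in isolated P (S :\: cnbhd P S y)).
Qed.

End Pair.
End Mirror.
Section Sigma.
Local Open Scope ring_scope.
Variable P : position.
Local Notation T := (pV P).
Local Notation adj := (padj P).
Local Notation col := (pcol P).
Variable s : T -> T.
Hypotheses (sK : involutive s) (sadj : forall u v, adj (s u) (s v) = adj u v).

Lemma in_pre (A : {set T}) u : (u \in s @^-1: A) = (s u \in A).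
Proof. by rewrite inE. Qed.

Lemma cnbhd_pre (A : {set T}) x : cnbhd P (s @^-1: A) (s x) = s @^-1: cnbhd P A x.
Proof.
apply/setP => w; rewrite !inE; congr (_ && (_ || _)).
  by apply/idP/idP => /eqP e; apply/eqP; [rewrite e sK | rewrite -e sK].
by rewrite -sadj sK.
Qed.

Lemma isolated_pre (A : {set T}) : isolated P (s @^-1: A) = s @^-1: isolated P A.
Proof.
apply/setP => z; rewrite in_pre; apply/isolatedP/isolatedP => [[zA I]|[zA I]]; split.
- by rewrite -in_pre.
- move=> w wA; have := I (s w); rewrite in_pre sK => /(_ wA).
  by rewrite -sadj sK.
- by rewrite in_pre.
- by move=> w; rewrite in_pre => wA; rewrite -sadj; apply: I.
Qed.

Lemma after_pre (A : {set T}) x : after P (s @^-1: A) (s x) = s @^-1: after P A x.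
Proof. by rewrite /after cnbhd_pre -preimsetD isolated_pre -preimsetD. Qed.

Lemma gain_pre (A : {set T}) x : gain P (s @^-1: A) (s x) = gain P A x.
Proof. by rewrite !gain_card after_pre !card_preimset //; apply: (can_inj sK). Qed.

Lemma sym_mem (A : {set T}) : s @^-1: A = A -> forall u, (s u \in A) = (u \in A).
Proof. by move=> hA u; rewrite -[in RHS]hA inE. Qed.

Lemma mirror (S : {set T}) x : isofree S -> s @^-1: S = S -> x \in S -> col (s x) = ~~ col x ->
  ~~ adj x (s x) ->
  [/\ s x \in after P S x, gain P (after P S x) (s x) = gain P S x &
      s @^-1: after P (after P S x) (s x) = after P (after P S x) (s x)].
Proof.
move=> fS hS xS cx nx.
have sxS : s x \in S by rewrite (sym_mem hS).
split; first exact: K0 fS sxS cx nx.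
  by rewrite (K_gain fS xS sxS cx nx) -{1}hS gain_pre.
have e1 : s @^-1: after P S x = after P S (s x) by rewrite -after_pre hS.
have e2 : s @^-1: after P S (s x) = after P S x by rewrite -after_pre sK hS.
by rewrite (K_after fS xS sxS cx nx) preimsetI e1 e2 setIC.
Qed.

End Sigma.
Section Sum.
Local Open Scope ring_scope.
Variables G X : position.
Local Notation P := (psum G X).
Local Notation TP := (pV (psum G X)).

Definition prX (S : {set TP}) : {set pV X} := inr @^-1: S.
Definition prG (S : {set TP}) : {set pV G} := inl @^-1: S.

Lemma prXD (A B : {set TP}) : prX (A :\: B) = prX A :\: prX B.
Proof. exact: preimsetD. Qed.
Lemma prGD (A B : {set TP}) : prG (A :\: B) = prG A :\: prG B.
Proof. exact: preimsetD. Qed.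

Lemma card_split (S : {set TP}) : #|S| = (#|prG S| + #|prX S|)%N.
Proof.
rewrite -!sum1_card big_sumType /=; congr (_ + _)%N; apply: eq_bigl => a; by rewrite inE.
Qed.

Lemma prX_cnbhd_inr (S : {set TP}) y : prX (cnbhd P S (inr y)) = cnbhd X (prX S) y.
Proof. by apply/setP => b; rewrite !inE. Qed.

Lemma prG_cnbhd_inr (S : {set TP}) y : prG (cnbhd P S (inr y)) = set0.
Proof. by apply/setP => a; rewrite !inE /= ?andbF. Qed.

Lemma prX_cnbhd_inl (S : {set TP}) x : prX (cnbhd P S (inl x)) = set0.
Proof. by apply/setP => a; rewrite !inE /= ?andbF. Qed.

Lemma prG_cnbhd_inl (S : {set TP}) x : prG (cnbhd P S (inl x)) = cnbhd G (prG S) x.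
Proof. by apply/setP => b; rewrite !inE. Qed.

Lemma prX_isolated (S : {set TP}) : prX (isolated P S) = isolated X (prX S).
Proof.
apply/setP => b; rewrite [in LHS]inE; apply/isolatedP/isolatedP => [[bS I]|[bS I]]; split.
- by rewrite inE.
- by move=> c cS; apply: (I (inr c)); rewrite inE in cS.
- by rewrite inE in bS.
- by case=> [a|c] //= cS; apply: I; rewrite inE.
Qed.

Lemma prG_isolated (S : {set TP}) : prG (isolated P S) = isolated G (prG S).
Proof.
apply/setP => b; rewrite [in LHS]inE; apply/isolatedP/isolatedP => [[bS I]|[bS I]]; split.
- by rewrite inE.
- by move=> c cS; apply: (I (inl c)); rewrite inE in cS.
- by rewrite inE in bS.
- by case=> [c|a] //= cS; apply: I; rewrite inE.
Qed.

Lemma isofree_prX (S : {set TP}) : isofree S -> isofree (prX S).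
Proof.
move=> fS b; rewrite inE => bS; case: (fS _ bS) => [[a|c]] //= cS bc.
by exists c => //; rewrite inE.
Qed.

Lemma isofree_prG (S : {set TP}) : isofree S -> isofree (prG S).
Proof.
move=> fS b; rewrite inE => bS; case: (fS _ bS) => [[c|a]] //= cS bc.
by exists c => //; rewrite inE.
Qed.

Lemma iso_empty (Q : position) (A : {set pV Q}) : isofree A -> isolated Q A = set0.
Proof.
move=> fA; apply/setP => z; rewrite in_set0; apply/negP => /isolatedP[zA I].
by case: (fA _ zA) => w wA zw; move: (I w wA); rewrite zw.
Qed.

Lemma prX_after_inr (S : {set TP}) y : prX (after P S (inr y)) = after X (prX S) y.
Proof. by rewrite /after !prXD prX_isolated !prXD prX_cnbhd_inr. Qed.

Lemma prG_after_inl (S : {set TP}) x : prG (after P S (inl x)) = after G (prG S) x.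
Proof. by rewrite /after !prGD prG_isolated !prGD prG_cnbhd_inl. Qed.

Lemma prG_after_inr (S : {set TP}) y : isofree S -> prG (after P S (inr y)) = prG S.
Proof.
move=> fS; rewrite /after !prGD prG_isolated !prGD prG_cnbhd_inr.
rewrite setD0 iso_empty ?setD0 //; exact: isofree_prG.
Qed.

Lemma prX_after_inl (S : {set TP}) x : isofree S -> prX (after P S (inl x)) = prX S.
Proof.
move=> fS; rewrite /after !prXD prX_isolated !prXD prX_cnbhd_inl.
rewrite setD0 iso_empty ?setD0 //; exact: isofree_prX.
Qed.

Lemma gain_inr (S : {set TP}) y : isofree S -> gain P S (inr y) = gain X (prX S) y.
Proof.
move=> fS; rewrite !gain_card (card_split S) (card_split (after P S (inr y))).
rewrite prX_after_inr prG_after_inr //; lia.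
Qed.

End Sum.
Section Main.
Local Open Scope ring_scope.
Variables G X : position.
Local Notation P := (psum G X).
Local Notation TP := (pV (psum G X)).
Variable s : pV G -> pV G.
Hypotheses (sK : involutive s) (sadj : forall a b, padj G (s a) (s b) = padj G a b)
  (scol : forall a, pcol G (s a) = ~~ pcol G a) (snadj : forall a, ~~ padj G a (s a)).

Definition sg (u : TP) : TP := match u with inl a => inl (s a) | inr b => inr b end.

Lemma sgK : involutive sg.
Proof. by case=> [a|b] //=; rewrite sK. Qed.

Lemma sg_adj u v : padj P (sg u) (sg v) = padj P u v.
Proof. by case: u => [a|b]; case: v => [c|d] //=; apply: sadj. Qed.

Lemma sym_after (S : {set TP}) u : sg @^-1: S = S -> sg @^-1: after P S u = after P S (sg u).
Proof. by move=> hS; rewrite -(after_pre sgK sg_adj) hS. Qed.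

Lemma prX_set0 : prX (set0 : {set TP}) = set0.
Proof. by apply/setP => b; rewrite !inE. Qed.

Lemma main_ind n (S : {set TP}) : (#|S| <= n)%N -> isofree S -> sg @^-1: S = S ->
  V true S = V true (prX S) /\ V false S = V false (prX S).
Proof.
elim: n S => [|n IH] S hn fS hS.
  have S0 : S = set0 by apply/cards0_eq; apply/eqP; rewrite -leqn0.
  by rewrite S0 prX_set0 !V_set0.
have IH' : forall S' : {set TP}, (#|S'| < #|S|)%N -> isofree S' -> sg @^-1: S' = S' ->
    V true S' = V true (prX S') /\ V false S' = V false (prX S').
  by move=> S' h; apply: IH; rewrite -ltnS; apply: leq_trans h hn.
have mir : forall a, inl a \in S -> forall t,
    [/\ sg (inl a) \in after P S (inl a), gain P (after P S (inl a)) (sg (inl a)) = gain P S (inl a),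
        V t (after P (after P S (inl a)) (sg (inl a))) = V t (prX S) &
        pcol P (sg (inl a)) = ~~ pcol P (inl a)].
  move=> a aS t.
  have [m1 m2 m3] := mirror sgK sg_adj fS hS aS (scol a) (snadj a).
  split => //; last exact: scol.
  have c1 := card_after m1; have c2 := card_after aS.
  have [h1 h2] := IH' _ (ltn_trans c1 c2) (@isofree_after _ _ _) m3.
  have e : prX (after P (after P S (inl a)) (sg (inl a))) = prX S.
    by rewrite [sg _]/= prX_after_inl ?prX_after_inl //; apply: isofree_after.
  by case: t; rewrite ?h1 ?h2 e.
have inr_step : forall b, inr b \in S ->
    gain P S (inr b) = gain X (prX S) b /\
    forall t, V t (after P S (inr b)) = V t (after X (prX S) b).
  move=> b bS; split; first exact: gain_inr.
  have c := card_after bS.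
  have [h1 h2] := IH' _ c (@isofree_after _ _ _) (sym_after _ hS).
  by rewrite -prX_after_inr; case.
have bX : forall b, (inr b \in S) = (b \in prX S) by move=> b; rewrite inE.
have aL : V true S <= V true (prX S).
  case: (set_0Vmem S) => [S0|[z zS]]; first by rewrite S0 prX_set0 !V_set0.
  case: (V_ex (isofree_col true fS zS)) => [[a|b] [uS cu ->]].
    have [m1 m2 m3 m4] := mir a uS true.
    have h1 := V_le m1 (etrans m4 (congr1 negb cu)).
    by rewrite m2 m3 in h1; lia.
  have [g1 g2] := inr_step b uS.
  rewrite g1 g2; apply: V_ge => //; by rewrite -bX.
have aR : V false (prX S) <= V false S.
  case: (set_0Vmem S) => [S0|[z zS]]; first by rewrite S0 prX_set0 !V_set0.
  case: (V_ex (isofree_col false fS zS)) => [[a|b] [uS cu ->]].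
    have [m1 m2 m3 m4] := mir a uS false.
    have h1 := V_ge m1 (etrans m4 (congr1 negb cu)).
    by rewrite m2 m3 in h1; lia.
  have [g1 g2] := inr_step b uS.
  rewrite g1 g2; apply: V_le => //; by rewrite -bX.
have fX := isofree_prX fS.
have LR := LR_gen fS.
split; apply/eqP; rewrite eq_le.
  rewrite aL /=.
  case: (set_0Vmem (prX S)) => [E|[b bS]].
    by rewrite E V_set0; rewrite E V_set0 in aR; lia.
  case: (V_ex (isofree_col true fX bS)) => b' [b'S cb ->].
  rewrite -bX in b'S; have [g1 g2] := inr_step b' b'S.
  by rewrite -g1 -g2; apply: V_ge.
rewrite aR andbT.
case: (set_0Vmem (prX S)) => [E|[b bS]].
  by rewrite E V_set0; rewrite E V_set0 in aL; lia.
case: (V_ex (isofree_col false fX bS)) => b' [b'S cb ->].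
rewrite -bX in b'S; have [g1 g2] := inr_step b' b'S.
by rewrite -g1 -g2; apply: V_le.
Qed.

End Main.
Lemma mem_prX (G X : position) (A : {set pV (psum G X)}) b : (b \in prX A) = (inr b \in A).
Proof. by rewrite /prX in_set. Qed.

Theorem zero_of_sigma (G : position) (s : pV G -> pV G) :
  involutive s -> (forall a b, padj G (s a) (s b) = padj G a b) ->
  (forall a, pcol G (s a) = ~~ pcol G a) -> (forall a, ~~ padj G a (s a)) ->
  (forall a, exists b, padj G a b) -> is_zero G.
Proof.
move=> sK sadj scol snadj hnb X.
set P := psum G X.
set S0 : {set pV P} := setT :\: isolated P setT.
have hprX : prX S0 = setT :\: isolated X setT.
  by rewrite /S0 prXD prX_isolated /prX preimsetT.
have fS0 : isofree S0 := @isofree_diso P setT.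
have hS0 : sg s @^-1: S0 = S0.
  by rewrite /S0 preimsetD -(isolated_pre (sgK sK) (sg_adj sadj)) preimsetT.
have [h1 h2] := main_ind sK sadj scol snadj (leqnn _) fS0 hS0.
have hiso : forall a, (inl a \in isolated P setT) = false.
  move=> a; case: (hnb a) => b ab; apply: negbTE; apply/negP => /isolatedP[_ I].
  by move: (I (inl b)); rewrite in_setT /= ab => /(_ isT).
have memiso : forall b, (inr b \in isolated P setT) = (b \in isolated X setT).
  by move=> b; rewrite -mem_prX prX_isolated /prX preimsetT.
have init : init_score P = init_score X.
  rewrite /init_score big_sumType /=.
  rewrite big_pred0; last by move=> a; exact: hiso a.
  rewrite GRing.add0r; apply: eq_bigl => b; exact: memiso b.
rewrite /Ls /Rs init !(gval_fuel _ (max_card _)) -/S0 h1 h2 hprX.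
by [].
Qed.
Lemma oddE (x : nat) : odd x = (x %% 2 == 1)%N.
Proof. by rewrite modn2; case: (odd x). Qed.

Lemma cyc_relE k (a b : 'I_k) :
  ((a.+1 %% k == b) || (b.+1 %% k == a))%N =
  [|| (a.+1 == b)%N, (b.+1 == a)%N, ((a.+1 == k) && (b == 0 :> nat))%N | ((b.+1 == k) && (a == 0 :> nat))%N].
Proof.
have ha := ltn_ord a; have hb := ltn_ord b.
have E : forall x : nat, (x < k)%N -> x.+1 %% k = if x.+1 == k then 0%N else x.+1.
  move=> x hx; case: ifP => [/eqP ->|h]; first by rewrite modnn.
  by rewrite modn_small //; rewrite ltn_neqAle h hx.
rewrite (E a ha) (E b hb).
case: ifP => h1; case: ifP => h2; lia.
Qed.

Section Grid.
Variables n m : nat.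
Hypotheses (hn0 : (0 < n)%N) (en : ~~ odd n) (hn4 : (4 <= n)%N).

Definition shf (a : 'I_n) : 'I_n := Ordinal (ltn_pmod (a + n./2) hn0).

Lemma hh : n = (n./2 + n./2)%N.
Proof. by rewrite addnn even_halfK. Qed.

Lemma shf_spec (a : 'I_n) :
  ((a < n./2)%N /\ shf a = (a + n./2)%N :> nat) \/ ((n./2 <= a)%N /\ shf a = (a - n./2)%N :> nat).
Proof.
have ha := ltn_ord a; have e := hh; rewrite /shf /=.
case: (ltnP a n./2) => h; [left|right]; split => //.
  by rewrite modn_small //; lia.
have -> : (a + n./2 = (a - n./2) + n)%N by lia.
by rewrite modnDr modn_small //; lia.
Qed.

Lemma shfK : involutive shf.
Proof.
move=> a; apply: ord_inj; have e := hh; have ha := ltn_ord a.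
have := shf_spec a; have := shf_spec (shf a); lia.
Qed.

Definition g2 (b : 'I_m) : 'I_m := if odd n./2 then b else rev_ord b.

Lemma g2K : involutive g2.
Proof. by move=> b; rewrite /g2; case: (odd n./2) => //; exact: rev_ordK. Qed.

Definition sgrid (u : 'I_n * 'I_m) : 'I_n * 'I_m := (shf u.1, g2 u.2).

Lemma sgridK : involutive sgrid.
Proof. by case=> a b; rewrite /sgrid /= shfK g2K. Qed.

Lemma shf_cyc (a b : 'I_n) :
  ((shf a).+1 %% n == shf b) || ((shf b).+1 %% n == shf a) = (a.+1 %% n == b) || (b.+1 %% n == a).
Proof.
rewrite !cyc_relE; have e := hh; have ha := ltn_ord a; have hb := ltn_ord b.
have := shf_spec a; have := shf_spec b; lia.
Qed.

Lemma shf_eq (a b : 'I_n) : (shf a == shf b :> nat) = (a == b :> nat).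
Proof. have e := hh; have ha := ltn_ord a; have hb := ltn_ord b.
have := shf_spec a; have := shf_spec b; lia.
Qed.

Lemma g2_eq (a b : 'I_m) : (g2 a == g2 b :> nat) = (a == b :> nat).
Proof.
have ha := ltn_ord a; have hb := ltn_ord b.
by rewrite /g2; case: ifP => _ //=; lia.
Qed.

Lemma g2_cyc (a b : 'I_m) :
  ((g2 a).+1 %% m == g2 b) || ((g2 b).+1 %% m == g2 a) = (a.+1 %% m == b) || (b.+1 %% m == a).
Proof.
rewrite !cyc_relE; have ha := ltn_ord a; have hb := ltn_ord b.
by rewrite /g2; case: ifP => _ //=; lia.
Qed.

Lemma g2_path (a b : 'I_m) :
  ((g2 a).+1 == g2 b :> nat) || ((g2 b).+1 == g2 a :> nat) = (a.+1 == b :> nat) || (b.+1 == a :> nat).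
Proof.
have ha := ltn_ord a; have hb := ltn_ord b.
by rewrite /g2; case: ifP => _ //=; lia.
Qed.

Hypothesis hpar : odd n./2 || ~~ odd m.

Lemma sgrid_col u : grid_col n m (sgrid u) = ~~ grid_col n m u.
Proof.
case: u => a b; rewrite /grid_col /sgrid /= negbK.
have e := hh; have ha := ltn_ord a; have hb := ltn_ord b.
have := shf_spec a; move: hpar; rewrite /g2; case: ifP => oh /=.
  move: oh; rewrite !oddE => oh _; lia.
move: oh; rewrite !oddE => oh om; lia.
Qed.

Lemma torus_sadj u v : torus_adj n m (sgrid u) (sgrid v) = torus_adj n m u v.
Proof. by rewrite /torus_adj /sgrid /= shf_eq g2_eq shf_cyc g2_cyc. Qed.

Lemma cyl_sadj u v : cyl_adj n m (sgrid u) (sgrid v) = cyl_adj n m u v.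
Proof. by rewrite /cyl_adj /sgrid /= shf_eq g2_eq shf_cyc g2_path. Qed.

Lemma shf_far (a : 'I_n) : (a == shf a :> nat) = false /\
  ((a.+1 %% n == shf a) || ((shf a).+1 %% n == a)) = false.
Proof.
rewrite cyc_relE; have e := hh; have ha := ltn_ord a; have := shf_spec a.
split; lia.
Qed.

Lemma torus_snadj u : ~~ torus_adj n m u (sgrid u).
Proof.
case: u => a b; rewrite /torus_adj /sgrid /=; have [-> ->] := shf_far a.
by rewrite andbF.
Qed.

Lemma cyl_snadj u : ~~ cyl_adj n m u (sgrid u).
Proof.
case: u => a b; rewrite /cyl_adj /sgrid /=; have [-> ->] := shf_far a.
by rewrite andbF.
Qed.

End Grid.
Definition swp (k l : nat) (u : 'I_k * 'I_l) : 'I_l * 'I_k := (u.2, u.1).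

Lemma swpK k l (u : 'I_k * 'I_l) : swp (swp u) = u.
Proof. by case: u. Qed.

Lemma torus_swp k l u v : torus_adj k l u v = torus_adj l k (swp u) (swp v).
Proof. by rewrite /torus_adj orbC. Qed.

Lemma grid_col_swp k l u : grid_col k l u = grid_col l k (swp u).
Proof. by rewrite /grid_col addnC. Qed.

Theorem mainTheorem12 :
  (forall (n m : nat) (hn : ~~ odd n) (hm : ~~ odd m),
      (0 < n)%N -> (0 < m)%N -> (4 <= n)%N \/ (4 <= m)%N ->
      is_zero (torus n m hn hm))
  /\
  (forall (n m : nat) (hn : ~~ odd n),
      (0 < n)%N -> (0 < m)%N ->
      ((4 <= n)%N /\ ~~ odd m) \/ (exists k : nat, (0 < k)%N /\ n = (4 * k + 2)%N) ->
      is_zero (cylinder n m hn)).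
Proof.
split.
  move=> n m hn hm hn0 hm0 [h4|h4].
    have hp : odd n./2 || ~~ odd m by rewrite hm orbT.
    apply: (@zero_of_sigma (torus n m hn hm) (@sgrid n m hn0)).
    - exact: sgridK.
    - exact: torus_sadj.
    - exact: sgrid_col.
    - exact: torus_snadj.
    - move=> u; exists (Ordinal (ltn_pmod u.1.+1 hn0), u.2).
      by rewrite /= /torus_adj /= !eqxx orbT.
  have hp : odd m./2 || ~~ odd n by rewrite hn orbT.
  pose s u := swp (@sgrid m n hm0 (swp u)).
  apply: (@zero_of_sigma (torus n m hn hm) s).
  - move=> u; rewrite /s.
    have -> : swp (swp (@sgrid m n hm0 (swp u))) = @sgrid m n hm0 (swp u) by case: (sgrid _ _).
    by rewrite (sgridK hm0 hm h4); case: u.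
  - move=> u v; rewrite /= torus_swp /s !swpK (torus_sadj hm0 hm h4).
    by rewrite -torus_swp.
  - move=> u; rewrite /= grid_col_swp /s swpK (sgrid_col hm0 hm h4 hp).
    by rewrite -grid_col_swp.
  - move=> u; rewrite /= torus_swp /s swpK.
    exact: (torus_snadj hm0 hm h4 hp).
  - move=> u; exists (Ordinal (ltn_pmod u.1.+1 hn0), u.2).
    by rewrite /= /torus_adj /= !eqxx orbT.
move=> n m hn hn0 hm0 hc.
have [h4 hp] : (4 <= n)%N /\ (odd n./2 || ~~ odd m).
  case: hc => [[h4 hm]|[k [hk e]]]; first by rewrite hm orbT.
  have e2 := hh hn; split; first lia.
  by rewrite oddE; apply/orP; left; lia.
apply: (@zero_of_sigma (cylinder n m hn) (@sgrid n m hn0)).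
- exact: sgridK.
- exact: cyl_sadj.
- exact: sgrid_col.
- exact: cyl_snadj.
- move=> u; exists (Ordinal (ltn_pmod u.1.+1 hn0), u.2).
  by rewrite /= /cyl_adj /= !eqxx orbT.
Qed.
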